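(* Let $x\in\mathrm{Cay}_n$. (1) If $y\in\mathrm{Cay}_k$ and $y\le x$, then $\gamma(y)\le\gamma(x)$. (2) If $\sigma\in\mathcal{S}_k$ and $\sigma\le\gamma(x)$, then there exists $y\in\mathrm{Cay}_k$ such that $y\le x$ and $\gamma(y)=\sigma$.
   Context: $\mathrm{Cay}_n$ is the set of Cayley permutations of length $n$ (words of positive integers in which every integer from $1$ to the maximum occurs); $\mathcal{S}_k$ is the set of permutations of $[k]$. Containment $y\le x$: indices $i_1<\dots<i_k$ with $x(i_s)<x(i_t)\iff y(s)<y(t)$ and $x(i_s)=x(i_t)\iff y(s)=y(t)$. For $x\in\mathrm{Cay}_n$, $\gamma(x)\in\mathcal{S}_n$ is obtained by sorting the pairs $(x(i),i)$ increasingly by first coordinate, ties by decreasing second coordinate, and reading the second coordinates. *)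

(* Defs.v *)
From mathcomp Require Import all_boot.
Set Implicit Arguments. Unset Strict Implicit. Unset Printing Implicit Defensive.

(* Words are sequences of naturals; position s (0-based in Rocq) holds x(s+1). *)

Definition is_cayley (x : seq nat) : bool :=
  all (fun v => 0 < v) x &&
  all (fun v => v \in x) (iota 1 (\max_(v <- x) v)).

Definition Cay (n : nat) (x : seq nat) : bool := (size x == n) && is_cayley x.

Definition is_perm (k : nat) (s : seq nat) : bool := perm_eq s (iota 1 k).

Definition occurs_at (y x : seq nat) (idx : seq nat) : Prop :=
  [/\ size idx = size y, sorted ltn idx, all (fun i => i < size x) idx &
      forall s t, s < size y -> t < size y ->
        ((nth 0 x (nth 0 idx s) < nth 0 x (nth 0 idx t)) = (nth 0 y s < nth 0 y t))
        /\ ((nth 0 x (nth 0 idx s) == nth 0 x (nth 0 idx t)) = (nth 0 y s == nth 0 y t))].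

Definition contained (y x : seq nat) : Prop := exists idx, occurs_at y x idx.

Definition gamma_le (p q : nat * nat) : bool :=
  (p.1 < q.1) || ((p.1 == q.1) && (q.2 <= p.2)).

Definition gamma (x : seq nat) : seq nat :=
  map snd (sort gamma_le [seq (nth 0 x i, i.+1) | i <- iota 0 (size x)]).

(* Main.v *)
Require Import Defs.
From mathcomp Require Import all_boot.

Lemma nth_lt_sorted (T : Type) (r : rel T) (x0 : T) (s : seq T) i j :
  transitive r -> sorted r s -> i < j -> j < size s ->
  r (nth x0 s i) (nth x0 s j).
Proof.
move=> tr ss hij hj; apply: (sorted_ltn_nth tr) => //; rewrite inE //.
exact: ltn_trans hij hj.
Qed.

Lemma nth_mono (s : seq nat) i j : sorted ltn s -> i < size s -> j < size s ->
  (nth 0 s i < nth 0 s j) = (i < j).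
Proof.
move=> ss hi hj; case: (ltngtP i j) => h.
- exact: nth_lt_sorted ltn_trans ss h hj.
- apply/negbTE; rewrite -leqNgt ltnW //.
  exact: nth_lt_sorted ltn_trans ss h hi.
- by rewrite h ltnn.
Qed.

Lemma nth_monol (s : seq nat) i j : sorted ltn s -> i < size s -> j < size s ->
  (nth 0 s i <= nth 0 s j) = (i <= j).
Proof. by move=> ss hi hj; rewrite [LHS]leqNgt nth_mono // -leqNgt. Qed.

Lemma nth_monoe (s : seq nat) i j : sorted ltn s -> i < size s -> j < size s ->
  (nth 0 s i == nth 0 s j) = (i == j).
Proof. by move=> ss hi hj; rewrite !eqn_leq !nth_monol. Qed.

Lemma index_mono (s : seq nat) a b : sorted ltn s -> a \in s -> b \in s ->
  (index a s < index b s) = (a < b).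
Proof.
move=> ss ha hb.
by rewrite -[in RHS](nth_index 0 ha) -[in RHS](nth_index 0 hb) nth_mono ?index_mem.
Qed.

Lemma index_monol (s : seq nat) a b : sorted ltn s -> a \in s -> b \in s ->
  (index a s <= index b s) = (a <= b).
Proof. by move=> ss ha hb; rewrite [LHS]leqNgt index_mono // -leqNgt. Qed.

Lemma index_monoe (s : seq nat) a b : sorted ltn s -> a \in s -> b \in s ->
  (index a s == index b s) = (a == b).
Proof. by move=> ss ha hb; rewrite !eqn_leq !index_monol. Qed.

Definition Q (x : seq nat) (i j : nat) : bool :=
  gamma_le (nth 0 x i, i.+1) (nth 0 x j, j.+1).

Lemma QE x i j : Q x i j =
  (nth 0 x i < nth 0 x j) || ((nth 0 x i == nth 0 x j) && (j <= i)).
Proof. by rewrite /Q /gamma_le /= ltnS. Qed.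

Lemma Q_total x : total (Q x).
Proof. move=> i j; rewrite !QE; case: ltngtP => //= _; rewrite orbC; exact: leq_total. Qed.

Lemma Q_trans x : transitive (Q x).
Proof.
move=> j i l; rewrite !QE.
case: (ltngtP (nth 0 x i) (nth 0 x j)) => //= h1;
case: (ltngtP (nth 0 x j) (nth 0 x l)) => //= h2.
- by move=> _ _; rewrite (ltn_trans h1 h2).
- by move=> _ _; rewrite -h2 h1.
- by move=> _ _; rewrite h1 h2.
- move=> a b; rewrite h1 h2 eqxx ltnn /=; exact: leq_trans b a.
Qed.

Lemma Q_anti x : antisymmetric (Q x).
Proof.
move=> i j; rewrite !QE; case: ltngtP => //= _ /andP[a b].
by apply/eqP; rewrite eqn_leq a b.
Qed.

Definition g x := sort (Q x) (iota 0 (size x)).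

Lemma gammaE x : gamma x = map succn (g x).
Proof. by rewrite /gamma sort_map -map_comp. Qed.

Lemma g_perm x : perm_eq (g x) (iota 0 (size x)).
Proof. by rewrite /g perm_sort. Qed.

Lemma g_sorted x : sorted (Q x) (g x).
Proof. exact: (sort_sorted (@Q_total x)). Qed.

Lemma g_uniq x : uniq (g x).
Proof. by rewrite (perm_uniq (g_perm x)) iota_uniq. Qed.

Lemma size_g x : size (g x) = size x.
Proof. by rewrite (perm_size (g_perm x)) size_iota. Qed.

Lemma mem_g x i : (i \in g x) = (i < size x).
Proof. by rewrite (perm_mem (g_perm x)) mem_iota. Qed.

Lemma nth_gamma x i : i < size x -> nth 0 (gamma x) i = (nth 0 (g x) i).+1.
Proof. by move=> hi; rewrite gammaE (nth_map 0) ?size_g. Qed.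

Lemma size_gamma x : size (gamma x) = size x.
Proof. by rewrite gammaE size_map size_g. Qed.

Lemma nth_g_lt x i : i < size x -> nth 0 (g x) i < size x.
Proof. by move=> hi; rewrite -mem_g mem_nth ?size_g. Qed.

Lemma g_index_lt x a b : a < size x -> b < size x -> Q x a b -> a != b ->
  index a (g x) < index b (g x).
Proof.
move=> ha hb hq hne.
have ma : a \in g x by rewrite mem_g.
have mb : b \in g x by rewrite mem_g.
case: (ltngtP (index a (g x)) (index b (g x))) => // h.
- have := @nth_lt_sorted _ _ 0 _ _ _ (Q_trans x) (g_sorted x) h.
  rewrite index_mem => /(_ ma); rewrite !nth_index // => hba.
  by rewrite (@Q_anti x a b) ?hq ?hba ?eqxx in hne.
- by move: hne; rewrite -(nth_index 0 ma) h nth_index ?eqxx.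
Qed.

Lemma part1 (x y : seq nat) : contained y x -> contained (gamma y) (gamma x).
Proof.
case=> idx [Hsz Hsort Hall Hval].
set k := size y.
have szi : size idx = k by [].
have idx_lt p : p < k -> nth 0 idx p < size x.
  by move=> hp; apply: (allP Hall); apply: mem_nth; rewrite szi.
have QQ p q : p < k -> q < k -> Q x (nth 0 idx p) (nth 0 idx q) = Q y p q.
  move=> hp hq; rewrite !QE; case: (Hval p q hp hq) => -> ->.
  by rewrite nth_monol ?szi.
have gyk s : s < k -> nth 0 (g y) s < k by move=> hs; apply: nth_g_lt.
pose h s := nth 0 idx (nth 0 (g y) s).
exists (map (fun s => index (h s) (g x)) (iota 0 k)).
split.
- by rewrite size_map size_iota size_gamma.
- apply/(sortedP 0) => s; rewrite size_map size_iota => hs.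
  rewrite !(nth_map 0) ?size_iota ?nth_iota ?(ltnW hs) //.
  have g1 : nth 0 (g y) s < k by apply: gyk; apply: ltnW.
  have g2 : nth 0 (g y) s.+1 < k by apply: gyk.
  rewrite !add0n; apply: g_index_lt.
  + by apply: idx_lt.
  + by apply: idx_lt.
  + rewrite /h QQ //.
    move/(sortedP 0): (g_sorted y); apply; by rewrite size_g.
  + rewrite /h nth_monoe ?szi ?g1 ?g2 //.
    by rewrite nth_uniq ?size_g ?g_uniq ?(ltnW hs) ?hs // ltn_eqF.
- apply/allP => _ /mapP [s hs ->]; rewrite size_gamma -size_g index_mem mem_g.
  by apply: idx_lt; apply: gyk; move: hs; rewrite mem_iota.
- move=> s t hs ht; rewrite size_gamma in hs ht.
  have hb u : u < k -> index (h u) (g x) < size x.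
    by move=> hu; rewrite -[X in _ < X](size_g x) index_mem mem_g idx_lt ?gyk.
  have hm u : u < k -> h u \in g x by move=> hu; rewrite mem_g idx_lt ?gyk.
  rewrite !(nth_map 0) ?size_iota // !nth_iota // !add0n !nth_gamma ?hb //.
  rewrite !nth_index ?hm // !ltnS !eqSS /h.
  by split; [rewrite [LHS]nth_mono | rewrite [LHS]nth_monoe]; rewrite ?szi ?gyk.
Qed.

Lemma count_lt_iota k m : m <= k -> count (fun v => v < m) (iota 0 k) = m.
Proof.
move=> hm; rewrite -size_filter.
have := filter_iota_ltn 0 hm; rewrite add0n => ->.
by rewrite size_iota.
Qed.

Lemma perm_iso k p q : perm_eq p (iota 0 k) -> perm_eq q (iota 0 k) ->
  (forall s t, s < k -> t < k -> (nth 0 p s < nth 0 p t) = (nth 0 q s < nth 0 q t)) ->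
  p = q.
Proof.
move=> pp pq H.
have cnt r : perm_eq r (iota 0 k) -> forall s, s < k ->
    nth 0 r s = count (fun t => nth 0 r t < nth 0 r s) (iota 0 k).
  move=> pr s hs.
  have szr : size r = k by rewrite (perm_size pr) size_iota.
  have hle : nth 0 r s <= k.
    have : nth 0 r s \in r by rewrite mem_nth ?szr.
    by rewrite (perm_mem pr) mem_iota => /andP[_ /ltnW].
  transitivity (count (fun v => v < nth 0 r s) r).
    by rewrite (permP pr) count_lt_iota.
  by rewrite -[X in count _ X](mkseq_nth 0 r) /mkseq count_map szr.
have szp : size p = k by rewrite (perm_size pp) size_iota.
have szq : size q = k by rewrite (perm_size pq) size_iota.
apply: (@eq_from_nth _ 0); first by rewrite szp szq.
move=> s; rewrite szp => hs.
rewrite (cnt p pp s hs) (cnt q pq s hs).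
apply: eq_in_count => t; rewrite mem_iota => /andP[_ ht]; exact: H.
Qed.
From mathcomp Require Import zify.

Lemma part2 x k sigma : is_perm k sigma -> contained sigma (gamma x) ->
  exists y : seq nat, [/\ Cay k y, contained y x & gamma y = sigma].
Proof.
move=> Hp [J [HJs HJsort HJall HJval]].
have szs : size sigma = k by rewrite (perm_size Hp) size_iota.
rewrite szs in HJs HJval.
have sig_uniq : uniq sigma by rewrite (perm_uniq Hp) iota_uniq.
have sig_pos s : s < k -> 0 < nth 0 sigma s.
  move=> hs; have : nth 0 sigma s \in sigma by rewrite mem_nth ?szs.
  by rewrite (perm_mem Hp) mem_iota => /andP[].
have J_lt s : s < k -> nth 0 J s < size x.
  move=> hs; rewrite -(size_gamma x); apply: (allP HJall); by rewrite mem_nth ?HJs.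
pose a s := nth 0 (g x) (nth 0 J s).
have a_lt s : s < k -> a s < size x by move=> hs; apply: nth_g_lt; apply: J_lt.
have aval s t : s < k -> t < k -> (a s < a t) = (nth 0 sigma s < nth 0 sigma t)
    /\ (a s == a t) = (nth 0 sigma s == nth 0 sigma t).
  by move=> hs ht; case: (HJval s t hs ht); rewrite !nth_gamma ?J_lt // ltnS eqSS => -> ->.
have a_inj s t : s < k -> t < k -> (a s == a t) = (s == t).
  by move=> hs ht; case: (aval s t hs ht) => _ ->; rewrite nth_uniq ?szs.
pose A := map a (iota 0 k).
have A_uniq : uniq A.
  rewrite map_inj_in_uniq ?iota_uniq // => s t; rewrite !mem_iota /= !add0n => hs ht e.
  by apply/eqP; rewrite -a_inj // e.
pose P := sort leq A.
have P_sorted : sorted ltn P.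
  by rewrite ltn_sorted_uniq_leq sort_uniq A_uniq (sort_sorted leq_total).
have memP v : (v \in P) = (v \in A) by rewrite mem_sort.
have szP : size P = k by rewrite size_sort size_map size_iota.
have P_lt i : i < k -> nth 0 P i < size x.
  move=> hi; have : nth 0 P i \in A by rewrite -memP mem_nth ?szP.
  by case/mapP => s; rewrite mem_iota add0n => /andP[_ hs] ->; apply: a_lt.
pose y0 := map (nth 0 x) P.
pose u := sort leq (undup y0).
have u_sorted : sorted ltn u.
  by rewrite ltn_sorted_uniq_leq sort_uniq undup_uniq (sort_sorted leq_total).
have memu v : (v \in u) = (v \in y0) by rewrite mem_sort mem_undup.
pose y := map (fun v => (index v u).+1) y0.
have szy : size y = k by rewrite size_map size_map szP.
have y_nth i : i < k -> nth 0 y i = (index (nth 0 x (nth 0 P i)) u).+1.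
  by move=> hi; rewrite (nth_map 0) ?size_map ?szP // (nth_map 0) ?szP.
have xu i : i < k -> nth 0 x (nth 0 P i) \in u.
  by move=> hi; rewrite memu; apply: map_f; rewrite mem_nth ?szP.
have yv i j : i < k -> j < k ->
    (nth 0 y i < nth 0 y j) = (nth 0 x (nth 0 P i) < nth 0 x (nth 0 P j)) /\
    (nth 0 y i == nth 0 y j) = (nth 0 x (nth 0 P i) == nth 0 x (nth 0 P j)).
  by move=> hi hj; rewrite !y_nth // ltnS eqSS index_mono ?index_monoe ?xu.
exists y; split.
- rewrite /Cay szy eqxx /=; apply/andP; split.
  + by apply/allP => _ /mapP [v _ ->].
  + apply/allP => v; rewrite mem_iota => /andP[h1 h2].
    have Mle : \max_(w <- y) w <= size u.
      apply/bigmax_leqP_seq => _ /mapP [w hw ->] _.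
      by rewrite index_mem memu.
    have hv : v.-1 < size u by lia.
    apply/mapP; exists (nth 0 u v.-1).
    * by rewrite -memu mem_nth.
    * by rewrite index_uniq ?sort_uniq ?undup_uniq // prednK.
- exists P; split.
  + by rewrite szP szy.
  + exact: P_sorted.
  + by apply/allP => _ /(nthP 0) [i hi <-]; apply: P_lt; rewrite -szP.
  + by move=> s t hs ht; rewrite szy in hs ht; case: (yv s t hs ht) => -> ->.
- pose tau := map (fun s => index (a s) P) (iota 0 k).
  have aP s : s < k -> a s \in P.
    by move=> hs; rewrite memP; apply: map_f; rewrite mem_iota add0n hs.
  have tau_nth s : s < k -> nth 0 tau s = index (a s) P.
    by move=> hs; rewrite (nth_map 0) ?size_iota // nth_iota // add0n.
  have tau_lt s : s < k -> index (a s) P < k by move=> hs; rewrite -szP index_mem aP.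
  have P_tau s : s < k -> nth 0 P (index (a s) P) = a s by move=> hs; rewrite nth_index ?aP.
  have tau_perm : perm_eq tau (iota 0 k).
    have -> : tau = map (index^~ P) A by rewrite /tau /A -map_comp.
    have e2 : map (index^~ P) P = iota 0 k.
      rewrite -[X in map _ X](mkseq_nth 0 P) /mkseq -map_comp szP.
      rewrite -[RHS]map_id; apply/eq_in_map => i; rewrite mem_iota add0n => /andP [_ hi] /=.
      by rewrite index_uniq ?szP // sort_uniq.
    by rewrite -e2 perm_map // perm_sym perm_sort.
  have q_perm : perm_eq (map predn sigma) (iota 0 k).
    have e : map predn (iota 1 k) = iota 0 k.
      have := iotaDl 1 0 k; rewrite addn0 => ->.
      by rewrite -map_comp -[RHS]map_id; apply: eq_map.
    by rewrite -e perm_map.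
  have tau_eq : tau = map predn sigma.
    apply: (@perm_iso k _ _ tau_perm q_perm) => s t hs ht.
    rewrite tau_nth // tau_nth // !(nth_map 0) ?szs // index_mono ?aP //.
    case: (aval s t hs ht) => -> _.
    move: (sig_pos s hs) (sig_pos t ht).
    by case: (nth 0 sigma s) => // m _; case: (nth 0 sigma t).
  have gy : g y = tau.
    apply: (sorted_eq (@Q_trans y) (@Q_anti y) (g_sorted y)).
    + apply/(sortedP 0) => s; rewrite size_map size_iota => hs.
      have hs' : s < k := ltnW hs.
      rewrite !tau_nth // QE.
      case: (yv (index (a s) P) (index (a s.+1) P) (tau_lt s hs') (tau_lt s.+1 hs)).
      rewrite !P_tau // => -> ->.
      rewrite index_monol ?aP //.
      have hJ : nth 0 J s < nth 0 J s.+1.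
        by apply: (@nth_lt_sorted _ _ 0 _ _ _ ltn_trans HJsort (ltnSn s)); rewrite HJs.
      have := @nth_lt_sorted _ _ 0 _ _ _ (@Q_trans x) (g_sorted x) hJ.
      by rewrite size_g J_lt // QE; apply.
    + by rewrite (perm_trans (g_perm y)) // szy perm_sym.
  rewrite gammaE gy tau_eq -map_comp.
  rewrite -[RHS]map_id; apply/eq_in_map => v; rewrite (perm_mem Hp) mem_iota => /andP[h _] /=.
  exact: prednK.
Qed.

Theorem corollary4p7 (n : nat) (x : seq nat) : Cay n x ->
  (forall (k : nat) (y : seq nat), Cay k y -> contained y x ->
     contained (gamma y) (gamma x)) /\
  (forall (k : nat) (sigma : seq nat), is_perm k sigma -> contained sigma (gamma x) ->
     exists y : seq nat, [/\ Cay k y, contained y x & gamma y = sigma]).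
Proof.
move=> _; split.
- by move=> k y _; apply: part1.
- by move=> k sigma; apply: part2.
Qed.
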